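(* Let $R\subseteq S$, $\sigma$ be as in the context, $n=n_1+\cdots+n_\ell$. Let $\mathbf{a}=(a_1,\ldots,a_\ell)\in(S^* )^\ell$ and $\beta_{i,j}\in S$ ($1\le i\le\ell$, $1\le j\le n_i$) satisfy: (i) $a_i-a_j^\beta\in S^*$ for all $\beta\in S^*$ and $1\le i<j\le\ell$; (ii) for each $i$, $\beta_{i,1},\ldots,\beta_{i,n_i}$ are $R$-linearly independent. Let $b_{i,j}=\sigma(\beta_{i,j})a_i\beta_{i,j}^{-1}$. Fix $1\le k\le n-1$ and $t=\lfloor (n-k)/2\rfloor$. Let $\mathbf{c}\in\mathcal{C}_k(\mathbf{a},\boldsymbol\beta)$, let $\mathbf{e}\in S^n$ with ${\rm wt}_{SR}(\mathbf{e})\le t$, and $\mathbf{r}=\mathbf{c}+\mathbf{e}$, with coordinates $c_{i,j},r_{i,j}$. Let $F,H\in S[x;\sigma]$ be the unique skew polynomials of degree less than $n$ with $F(b_{i,j})=c_{i,j}\beta_{i,j}^{-1}$ and $H(b_{i,j})=r_{i,j}\beta_{i,j}^{-1}$ for all $i,j$. If $L,Q\in S[x;\sigma]$ are such that $L$ is monic, $\deg(L)\le t$, $\deg(Q)\le t+k-1$, and $(LH)(b_{i,j})=Q(b_{i,j})$ for all $1\le j\le n_i$, $1\le i\le\ell$, then $Q=LF$.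
   Context: $R$ is a finite commutative chain ring with maximal ideal $\mathfrak{m}$, $q=|R/\mathfrak{m}|$; $S=R[x]/(h)$ with $h$ monic of degree $m$ irreducible modulo $\mathfrak{m}$, local with maximal ideal $\mathfrak{M}=\mathfrak{m}S$ and unit group $S^*=S\setminus\mathfrak{M}$. $\sigma$ is a ring automorphism of $S$ generating the Galois group of $R\subseteq S$, with fixed ring $R$, reducing modulo $\mathfrak{M}$ to $y\mapsto y^q$. $S[x;\sigma]$ is the skew polynomial ring with $xa=\sigma(a)x$. Remainder evaluation: for $P\in S[x;\sigma]$ and $b\in S$, $P(b)$ is the unique $c\in S$ with $P=Q'(x-b)+c$ for some $Q'\in S[x;\sigma]$. For $a\in S$, $\beta\in S^*$: $a^\beta=\sigma(\beta)a\beta^{-1}$; $N_s(a)=\sigma^{s-1}(a)\cdots a$, $\mathcal{D}_a^s(\beta)=\sigma^s(\beta)N_s(a)$. The linearized Reed–Solomon code $\mathcal{C}_k(\mathbf{a},\boldsymbol\beta)\subseteq S^n$ is the $S$-row span of the $k\times n$ matrix with rows $s=0,\ldots,k-1$ and columns $(i,j)$ (ordered $(1,1),\ldots,(1,n_1),\ldots,(\ell,n_\ell)$), entry $\mathcal{D}_{a_i}^s(\beta_{i,j})$. Sum-rank weight: for $\mathbf{u}\in S^s$, ${\rm rk}(\mathbf{u})$ is the number of nonzero diagonal entries of the Smith normal form over $R$ of the $m\times s$ coordinate matrix of $\mathbf{u}$ in an $R$-basis of $S$; for $\mathbf{e}=(\mathbf{e}^{(1)},\ldots,\mathbf{e}^{(\ell)})$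 with $\mathbf{e}^{(i)}\in S^{n_i}$, ${\rm wt}_{SR}(\mathbf{e})=\sum_i{\rm rk}(\mathbf{e}^{(i)})$. *)

(* Defs.v *)
From HB Require Import structures.
From mathcomp Require Import all_boot all_order all_algebra.
Set Implicit Arguments. Unset Strict Implicit. Unset Printing Implicit Defensive.
Import Order.TTheory GRing.Theory.
Local Open Scope ring_scope.

Definition is_ideal (T : finComUnitRingType) (I : {set T}) : Prop :=
  0 \in I /\ (forall x y, x \in I -> y \in I -> x + y \in I) /\
  (forall x, x \in I -> - x \in I) /\ (forall a x, x \in I -> a * x \in I).

Definition chain_ring (T : finComUnitRingType) : Prop :=
  forall I J : {set T}, is_ideal I -> is_ideal J -> I \subset J \/ J \subset I.

Definition maximal_ideal (T : finComUnitRingType) (M : {set T}) : Prop :=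
  is_ideal M /\ M != setT /\
  forall I : {set T}, is_ideal I -> M \subset I -> I = M \/ I = setT.

(* q = |R/m| : the number of cosets x + m *)
Definition qcard (T : finComUnitRingType) (M : {set T}) : nat :=
  #|[set [set x + y | y in M] | x : T]|.

(* irreducibility of the reduction of h modulo m, stated over R[x] *)
Definition poly_in_ideal (T : finComUnitRingType) (M : {set T}) (p : {poly T}) : Prop :=
  forall i, p`_i \in M.
(* reduction mod m is a unit of (R/m)[x], i.e. a nonzero constant *)
Definition unit_mod (T : finComUnitRingType) (M : {set T}) (f : {poly T}) : Prop :=
  f`_0 \notin M /\ forall i, (0 < i)%N -> f`_i \in M.
Definition irreducible_mod (T : finComUnitRingType) (M : {set T}) (h : {poly T}) : Prop :=
  ~ poly_in_ideal M h /\ ~ unit_mod M h /\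
  forall f g : {poly T}, poly_in_ideal M (h - f * g) -> unit_mod M f \/ unit_mod M g.

(* S = R[x]/(h): p |-> p(xi) is a surjective ring map R[x] -> S with kernel (h) *)
Definition is_quotient_by (R S : finComUnitRingType) (iota : {rmorphism R -> S})
  (h : {poly R}) (xi : S) : Prop :=
  (forall s : S, exists p : {poly R}, s = (map_poly iota p).[xi]) /\
  (forall p : {poly R}, (map_poly iota p).[xi] = 0 <-> exists g : {poly R}, p = g * h).

Definition in_mS (R S : finComUnitRingType) (iota : {rmorphism R -> S})
  (M : {set R}) (y : S) : Prop :=
  exists s : seq (R * S), all (fun p => p.1 \in M) s /\
    y = \sum_(p <- s) iota p.1 * p.2.

(* (a x^i)(b x^j) = a sigma^i(b) x^(i+j) *)
Definition skew_mul (S : finComUnitRingType) (sigma : S -> S) (P Q : {poly S}) : {poly S} :=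
  \sum_(i < size P) \sum_(j < size Q) (P`_i * iter i sigma Q`_j) *: 'X^(i + j).

(* remainder evaluation: P(b) = c  iff  P = Q'(x - b) + c for some Q' *)
Definition skew_ev (S : finComUnitRingType) (sigma : S -> S) (P : {poly S}) (b c : S) : Prop :=
  exists Q' : {poly S}, P = skew_mul sigma Q' ('X - b%:P) + c%:P.

Definition Nnorm (S : finComUnitRingType) (sigma : S -> S) (s : nat) (a : S) : S :=
  \prod_(i < s) iter (s.-1 - i) sigma a.
Definition Dop (S : finComUnitRingType) (sigma : S -> S) (a : S) (s : nat) (beta : S) : S :=
  iter s sigma beta * Nnorm sigma s a.

(* codeword c (in block form c_(i,j)) lies in C_k(a, beta): an S-combination of rows *)
Definition in_LRS (S : finComUnitRingType) (sigma : S -> S) (l : nat) (nn : 'I_l -> nat)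
  (k : nat) (a : 'I_l -> S) (beta : forall i, 'I_(nn i) -> S)
  (c : forall i, 'I_(nn i) -> S) : Prop :=
  exists u : 'I_k -> S, forall i j, c i j = \sum_(s < k) u s * Dop sigma (a i) s (beta i j).

Definition R_indep (R S : finComUnitRingType) (iota : {rmorphism R -> S}) (p : nat)
  (v : 'I_p -> S) : Prop :=
  forall r : 'I_p -> R, \sum_(j < p) iota (r j) * v j = 0 -> forall j, r j = 0.

Definition smith_rank (R : finComUnitRingType) (p s : nat) (A : 'M[R]_(p, s)) (rk : nat) : Prop :=
  exists (P : 'M[R]_p) (Q : 'M[R]_s) (dg : nat -> R),
    P \in unitmx /\ Q \in unitmx /\
    P *m A *m Q = \matrix_(i < p, j < s) (if (i : nat) == j then dg i else 0) /\
    (forall i, (i.+1 < minn p s)%N -> exists x, dg i.+1 = x * dg i) /\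
    #|[set i : 'I_(minn p s) | dg i != 0]| = rk.

(* rk(u) for u in S^s, using coordinates in the R-basis 1, xi, ..., xi^(d-1) *)
Definition rk_vec (R S : finComUnitRingType) (iota : {rmorphism R -> S}) (d : nat) (xi : S)
  (s : nat) (u : 'I_s -> S) (rk : nat) : Prop :=
  exists A : 'M[R]_(d, s),
    (forall j, u j = \sum_(i < d) iota (A i j) * xi ^+ i) /\ smith_rank A rk.

Definition wtSR_le (R S : finComUnitRingType) (iota : {rmorphism R -> S}) (d : nat) (xi : S)
  (l : nat) (nn : 'I_l -> nat) (e : forall i, 'I_(nn i) -> S) (t : nat) : Prop :=
  exists rk : 'I_l -> nat, (forall i, rk_vec iota d xi (e i) (rk i)) /\ (\sum_(i < l) rk i <= t)%N.

(* Main.v *)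
Require Import Defs.
From HB Require Import structures.
From mathcomp Require Import all_boot all_order all_algebra.
From mathcomp Require Import ring zify.
Set Implicit Arguments. Unset Strict Implicit. Unset Printing Implicit Defensive.
Import Order.TTheory GRing.Theory.
Local Open Scope ring_scope.

Section Iter.
Variable (S : comNzRingType) (sigma : {rmorphism S -> S}).
Lemma iterMr n x y : iter n sigma (x * y) = iter n sigma x * iter n sigma y.
Proof. by elim: n => //= n ->; rewrite rmorphM. Qed.
Lemma iterDr n x y : iter n sigma (x + y) = iter n sigma x + iter n sigma y.
Proof. by elim: n => //= n ->; rewrite rmorphD. Qed.
Lemma iterNr n x : iter n sigma (- x) = - iter n sigma x.
Proof. by elim: n => //= n ->; rewrite rmorphN. Qed.
Lemma iter0r n : iter n sigma 0 = 0.
Proof. by elim: n => //= n ->; rewrite rmorph0. Qed.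
Lemma iter1r n : iter n sigma 1 = 1.
Proof. by elim: n => //= n ->; rewrite rmorph1. Qed.
Lemma iterBr n x y : iter n sigma (x - y) = iter n sigma x - iter n sigma y.
Proof. by rewrite iterDr iterNr. Qed.
Lemma iter_sum n I (r : seq I) (P : pred I) (F : I -> S) :
  iter n sigma (\sum_(i <- r | P i) F i) = \sum_(i <- r | P i) iter n sigma (F i).
Proof. exact: (big_morph _ (iterDr n) (iter0r n)). Qed.
Lemma iter_prod n I (r : seq I) (P : pred I) (F : I -> S) :
  iter n sigma (\prod_(i <- r | P i) F i) = \prod_(i <- r | P i) iter n sigma (F i).
Proof. exact: (big_morph _ (iterMr n) (iter1r n)). Qed.
Lemma iter_fix n x : sigma x = x -> iter n sigma x = x.
Proof. by move=> hx; elim: n => //= n ->. Qed.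
End Iter.

Lemma sum_widen (V : nmodType) n m (F : nat -> V) : (n <= m)%N ->
  (forall i, (n <= i < m)%N -> F i = 0) ->
  \sum_(i < n) F i = \sum_(i < m) F i.
Proof.
move=> nm h; rewrite -!(big_mkord xpredT) [RHS](@big_cat_nat _ _ _ n) //=.
have -> : \sum_(n <= i < m) F i = 0.
  by rewrite big_nat_cond big1 // => i /andP[hi _]; exact: h.
by rewrite addr0.
Qed.

Section Dv.
Variable (S : finComUnitRingType) (sigma : {rmorphism S -> S}).

Definition Dv (a beta : S) (P : {poly S}) : S :=
  \sum_(i < size P) P`_i * (iter i sigma beta * Nnorm sigma i a).

Lemma Dv_wide (a b : S) (P : {poly S}) n : (size P <= n)%N ->
  Dv a b P = \sum_(i < n) P`_i * (iter i sigma b * Nnorm sigma i a).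
Proof.
move=> hn; rewrite /Dv (@sum_widen _ _ _ (fun i => P`_i * (iter i sigma b * Nnorm sigma i a)) hn) //.
by move=> i /andP[hi _]; rewrite nth_default // mul0r.
Qed.

Lemma DvD (a b : S) (P Q : {poly S}) : Dv a b (P + Q) = Dv a b P + Dv a b Q.
Proof.
pose n := maxn (size P) (size Q).
rewrite (@Dv_wide _ _ (P + Q) n) ?(leq_trans (size_polyD _ _)) //.
rewrite (@Dv_wide _ _ P n) ?leq_maxl // (@Dv_wide _ _ Q n) ?leq_maxr //.
by rewrite -big_split /=; apply: eq_bigr => i _; rewrite coefD mulrDl.
Qed.

Lemma Dv0 (a b : S) : Dv a b 0 = 0.
Proof. by rewrite /Dv size_poly0 big_ord0. Qed.

Lemma DvZ (a b c : S) (P : {poly S}) : Dv a b (c *: P) = c * Dv a b P.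
Proof.
rewrite (@Dv_wide _ _ (c *: P) (size P)) ?size_scale_leq // /Dv mulr_sumr.
by apply: eq_bigr => i _; rewrite coefZ -mulrA.
Qed.

Lemma DvN (a b : S) (P : {poly S}) : Dv a b (- P) = - Dv a b P.
Proof. by rewrite -scaleN1r DvZ mulN1r. Qed.

Lemma DvB (a b : S) (P Q : {poly S}) : Dv a b (P - Q) = Dv a b P - Dv a b Q.
Proof. by rewrite DvD DvN. Qed.

Lemma Dv_sum a b I (r : seq I) (Pr : pred I) (F : I -> {poly S}) :
  Dv a b (\sum_(i <- r | Pr i) F i) = \sum_(i <- r | Pr i) Dv a b (F i).
Proof. exact: (big_morph _ (DvD a b) (Dv0 a b)). Qed.

Lemma DvXn (a b c : S) n : Dv a b (c *: 'X^n) = c * (iter n sigma b * Nnorm sigma n a).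
Proof.
rewrite (@Dv_wide _ _ _ n.+1); last by rewrite (leq_trans (size_scale_leq _ _)) // size_polyXn.
rewrite big_ord_recr /= big1 ?add0r; first by rewrite coefZ coefXn eqxx mulr1.
by move=> i _; rewrite coefZ coefXn (ltn_eqF (ltn_ord i)) mulr0 mul0r.
Qed.

Lemma DvC (a b c : S) : Dv a b c%:P = c * b.
Proof.
by rewrite -alg_polyC -(expr0 'X) DvXn /= /Nnorm big_ord0 mulr1.
Qed.

Lemma Nnorm0 (a : S) : Nnorm sigma 0 a = 1.
Proof. by rewrite /Nnorm big_ord0. Qed.

Lemma NnormS (a : S) s : Nnorm sigma s.+1 a = iter s sigma a * Nnorm sigma s a.
Proof.
rewrite /Nnorm big_ord_recl subn0 /=; congr (_ * _).
by apply: eq_bigr => i _; rewrite /bump leq0n add1n; congr iter; lia.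
Qed.

Lemma Nnorm_add (a : S) i j :
  Nnorm sigma (i + j) a = iter i sigma (Nnorm sigma j a) * Nnorm sigma i a.
Proof.
elim: j => [|j IH]; first by rewrite addn0 Nnorm0 iter1r mul1r.
by rewrite addnS !NnormS IH iterMr -iterD mulrA.
Qed.

Lemma Dv_mul (a b : S) (P Q : {poly S}) :
  Dv a b (skew_mul sigma P Q) = Dv a (Dv a b Q) P.
Proof.
rewrite /skew_mul Dv_sum [in RHS]/Dv; apply: eq_bigr => i _.
rewrite Dv_sum iter_sum mulr_suml mulr_sumr; apply: eq_bigr => j _.
rewrite DvXn iterMr iterMr -iterD Nnorm_add; ring.
Qed.

Lemma Dv_beta_add (a : S) b1 b2 (P : {poly S}) : Dv a (b1 + b2) P = Dv a b1 P + Dv a b2 P.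
Proof. by rewrite /Dv -big_split; apply: eq_bigr => i _; rewrite iterDr mulrDl mulrDr. Qed.

Lemma Dv_beta0 (a : S) (P : {poly S}) : Dv a 0 P = 0.
Proof. by rewrite /Dv big1 // => i _; rewrite iter0r !mul0r mulr0. Qed.

Lemma Dv_beta_sum a (P : {poly S}) I (r : seq I) (Pr : pred I) (F : I -> S) :
  Dv a (\sum_(i <- r | Pr i) F i) P = \sum_(i <- r | Pr i) Dv a (F i) P.
Proof. exact: (big_morph _ (fun x y => Dv_beta_add a x y P) (Dv_beta0 a P)). Qed.

Lemma Dv_beta_scale (a x b : S) (P : {poly S}) : sigma x = x -> Dv a (x * b) P = x * Dv a b P.
Proof.
move=> hx; rewrite /Dv mulr_sumr; apply: eq_bigr => i _.
by rewrite iterMr iter_fix //; ring.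
Qed.

Lemma Dv_beta_neg (a b : S) (P : {poly S}) : Dv a (- b) P = - Dv a b P.
Proof. by rewrite -mulN1r Dv_beta_scale ?mulN1r // rmorphN rmorph1. Qed.

Lemma DvXsubC (a beta b : S) : Dv a beta ('X - b%:P) = sigma beta * a - b * beta.
Proof.
rewrite DvB DvC -['X]scale1r -(expr1 'X) DvXn /= NnormS Nnorm0 /=; ring.
Qed.

Lemma skew_ev_Dv (a beta b c : S) (P : {poly S}) : beta \is a GRing.unit ->
  b = sigma beta * a * beta^-1 -> skew_ev sigma P b c -> Dv a beta P = c * beta.
Proof.
move=> hu -> [Q' ->]; rewrite DvD Dv_mul DvXsubC DvC.
by rewrite -mulrA mulVr // mulr1 subrr Dv_beta0 add0r.
Qed.

Lemma skew_mul_wide (P Q : {poly S}) n : (size P <= n)%N ->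
  skew_mul sigma P Q = \sum_(i < n) P`_i *: (\sum_(j < size Q) (iter i sigma Q`_j) *: 'X^(i + j)).
Proof.
move=> hn; rewrite /skew_mul.
transitivity (\sum_(i < size P) P`_i *: (\sum_(j < size Q) (iter i sigma Q`_j) *: 'X^(i + j))).
  by apply: eq_bigr => i _; rewrite scaler_sumr; apply: eq_bigr => j _; rewrite scalerA.
apply: (@sum_widen _ _ _ (fun i => P`_i *: (\sum_(j < size Q) (iter i sigma Q`_j) *: 'X^(i + j))) hn).
by move=> i /andP[hi _]; rewrite nth_default // scale0r.
Qed.

Lemma skew_mulDl (P1 P2 Q : {poly S}) :
  skew_mul sigma (P1 + P2) Q = skew_mul sigma P1 Q + skew_mul sigma P2 Q.
Proof.
pose n := maxn (size P1) (size P2).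
rewrite (@skew_mul_wide (P1 + P2) Q n) ?(leq_trans (size_polyD _ _)) //.
rewrite (@skew_mul_wide P1 Q n) ?leq_maxl // (@skew_mul_wide P2 Q n) ?leq_maxr //.
by rewrite -big_split /=; apply: eq_bigr => i _; rewrite coefD scalerDl.
Qed.

Lemma skew_mul0l (Q : {poly S}) : skew_mul sigma 0 Q = 0.
Proof. by rewrite /skew_mul size_poly0 big_ord0. Qed.

Lemma skew_mulZl c (P Q : {poly S}) :
  skew_mul sigma (c *: P) Q = c *: skew_mul sigma P Q.
Proof.
rewrite (@skew_mul_wide (c *: P) Q (size P)) ?size_scale_leq //.
rewrite (@skew_mul_wide P Q (size P)) // scaler_sumr.
by apply: eq_bigr => i _; rewrite coefZ scalerA.
Qed.

Lemma skew_mul_suml I (r : seq I) (Pr : pred I) (F : I -> {poly S}) (Q : {poly S}) :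
  skew_mul sigma (\sum_(i <- r | Pr i) F i) Q = \sum_(i <- r | Pr i) skew_mul sigma (F i) Q.
Proof. exact: (big_morph _ (fun x y => skew_mulDl x y Q) (skew_mul0l Q)). Qed.

Lemma skew_mul_Xn (b : S) s :
  skew_mul sigma 'X^s ('X - b%:P) = 'X^(s.+1) - (iter s sigma b) *: 'X^s.
Proof.
rewrite /skew_mul size_polyXn big_ord_recr /= big1 ?add0r; last first.
  by move=> i _; rewrite big1 // => j _; rewrite coefXn (ltn_eqF (ltn_ord i)) mul0r scale0r.
rewrite size_XsubC !big_ord_recr big_ord0 /= add0r coefXn eqxx !mul1r.
rewrite !coefB !coefX !coefC /= subr0 sub0r iter1r scale1r iterNr scaleNr addn0 addn1.
by rewrite addrC.
Qed.

Fixpoint Wp (b : S) s : {poly S} :=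
  if s is s'.+1 then 'X^s' + iter s' sigma b *: Wp b s' else 0.

Lemma Wp_size b s : (size (Wp b s) <= s)%N.
Proof.
elim: s => [|s IH] /=; first by rewrite size_poly0.
rewrite (leq_trans (size_polyD _ _)) // geq_max size_polyXn leqnn /=.
by rewrite (leq_trans (size_scale_leq _ _)) // (leq_trans IH).
Qed.

Lemma Wp_eq b s : 'X^s = skew_mul sigma (Wp b s) ('X - b%:P) + (Nnorm sigma s b)%:P.
Proof.
elim: s => [|s IH] /=; first by rewrite skew_mul0l add0r Nnorm0 expr0.
rewrite skew_mulDl skew_mulZl skew_mul_Xn NnormS -scale_polyC.
have -> : skew_mul sigma (Wp b s) ('X - b%:P) = 'X^s - (Nnorm sigma s b)%:P.
  by rewrite [in RHS]IH addrK.
rewrite scalerBr; set u := iter s sigma b *: 'X^s; set v := iter s sigma b *: _.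
by rewrite addrA subrK addrNK.
Qed.

Definition Gq (b : S) (G : {poly S}) := \sum_(i < size G) G`_i *: Wp b i.
Definition Gc (b : S) (G : {poly S}) := \sum_(i < size G) G`_i * Nnorm sigma i b.

Lemma Gq_size b G : (size (Gq b G) <= (size G).-1)%N.
Proof.
rewrite /Gq (leq_trans (size_sum _ _ _)) //; apply/bigmax_leqP => i _.
rewrite (leq_trans (size_scale_leq _ _)) // (leq_trans (Wp_size _ _)) //.
by case: i => i /= hi; rewrite -ltnS prednK // (leq_ltn_trans _ hi).
Qed.

Lemma Gq_eq b G : G = skew_mul sigma (Gq b G) ('X - b%:P) + (Gc b G)%:P.
Proof.
rewrite /Gq /Gc skew_mul_suml rmorph_sum -big_split /=.
rewrite -{1}[G]coefK poly_def; apply: eq_bigr => i _.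
by rewrite skew_mulZl -scale_polyC -scalerDr -Wp_eq.
Qed.

End Dv.


Section Ideals.
Variable (R : finComUnitRingType) (I : {set R}).
Hypothesis hI : is_ideal I.
Lemma id0 : 0 \in I. Proof. by case: hI. Qed.
Lemma idD x y : x \in I -> y \in I -> x + y \in I. Proof. by case: hI => _ [h _]; apply: h. Qed.
Lemma idN x : x \in I -> - x \in I. Proof. by case: hI => _ [_ [h _]]; apply: h. Qed.
Lemma idM a x : x \in I -> a * x \in I. Proof. by case: hI => _ [_ [_ h]]; apply: h. Qed.
Lemma idMr a x : x \in I -> x * a \in I. Proof. by rewrite mulrC; apply: idM. Qed.
Lemma idB x y : x \in I -> y \in I -> x - y \in I. Proof. by move=> hx hy; apply: idD => //; apply: idN. Qed.
Lemma id_sum (J : Type) (r : seq J) (P : pred J) (F : J -> R) :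
  (forall j, P j -> F j \in I) -> \sum_(j <- r | P j) F j \in I.
Proof. by move=> h; apply: (big_ind (fun x => x \in I)) => //; [exact: id0 | exact: idD]. Qed.

Lemma pid_mul (p q : {poly R}) : poly_in_ideal I p -> poly_in_ideal I (p * q).
Proof. by move=> hp i; rewrite coefM; apply: id_sum => j _; apply: idMr. Qed.
Lemma pid_mulr (p q : {poly R}) : poly_in_ideal I p -> poly_in_ideal I (q * p).
Proof. by rewrite mulrC; apply: pid_mul. Qed.
Lemma pidD (p q : {poly R}) : poly_in_ideal I p -> poly_in_ideal I q -> poly_in_ideal I (p + q).
Proof. by move=> hp hq i; rewrite coefD; apply: idD. Qed.
Lemma pidN (p : {poly R}) : poly_in_ideal I p -> poly_in_ideal I (- p).
Proof. by move=> hp i; rewrite coefN; apply: idN. Qed.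
Lemma pidB (p q : {poly R}) : poly_in_ideal I p -> poly_in_ideal I q -> poly_in_ideal I (p - q).
Proof. by move=> hp hq; apply: pidD => //; apply: pidN. Qed.
End Ideals.

Definition pI (R : finComUnitRingType) (x : R) : {set R} := [set x * y | y : R].

Lemma pI_ideal (R : finComUnitRingType) (x : R) : is_ideal (pI x).
Proof.
split; first by apply/imsetP; exists 0; rewrite ?mulr0.
split; first by move=> ? ? /imsetP[y1 _ ->] /imsetP[y2 _ ->]; apply/imsetP; exists (y1 + y2); rewrite ?mulrDr.
split; first by move=> ? /imsetP[y1 _ ->]; apply/imsetP; exists (- y1); rewrite ?mulrN.
by move=> a ? /imsetP[y1 _ ->]; apply/imsetP; exists (a * y1); rewrite // mulrCA.
Qed.

Lemma pI_mem (R : finComUnitRingType) (x : R) : x \in pI x.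
Proof. by apply/imsetP; exists 1; rewrite ?mulr1. Qed.

Section LocalR.
Variable (R : finComUnitRingType) (mR : {set R}).
Hypotheses (hch : chain_ring R) (hmax : maximal_ideal mR).

Lemma mR_ideal : is_ideal mR. Proof. by case: hmax. Qed.

Lemma one_notin_m : 1 \notin mR.
Proof.
apply/negP => h1; case: hmax => _ [/negP hne _]; apply: hne.
by apply/eqP/setP => x; rewrite inE -(mulr1 x) idM //; exact: mR_ideal.
Qed.

Lemma local_unit x : x \notin mR -> x \is a GRing.unit.
Proof.
move=> hx; apply/unitrPr.
case: (hch (pI_ideal x) mR_ideal) => hs.
  by move: hx; rewrite (subsetP hs _ (pI_mem x)).
case: hmax => _ [_ hm]; case: (hm _ (pI_ideal x) hs) => he.
  by move: hx; rewrite -he pI_mem.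
have : 1 \in pI x by rewrite he inE.
by case/imsetP => y _ e; exists y.
Qed.

Lemma principal_m : exists2 pi, pi \in mR & forall x, x \in mR -> exists r, x = pi * r.
Proof.
have h0 : 0 \in mR := id0 mR_ideal.
case: (@arg_maxnP R 0 (fun p => p \in mR) (fun p => #|pI p|) h0) => pi hpi hm.
exists pi => // x hx.
have [hs|hs] := hch (pI_ideal x) (pI_ideal pi).
  by case/imsetP: (subsetP hs _ (pI_mem x)) => r _ ->; exists r.
have : pI pi == pI x by rewrite eqEcard hs; exact: (hm x hx).
move/eqP => e; have : x \in pI pi by rewrite e pI_mem.
by case/imsetP => r _ ->; exists r.
Qed.

Lemma nilp_m pi : pi \in mR -> exists e, pi ^+ e = 0.
Proof.
move=> hpi.
have hX : forall n, (0 < n)%N -> pi ^+ n \in mR.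
  by case=> // n _; rewrite exprS idMr //; exact: mR_ideal.
case: (boolP [exists i : 'I_(#|R|.+1), exists j : 'I_(#|R|.+1), (i < j)%N && (pi ^+ i == pi ^+ j)]).
  case/existsP => i /existsP[j /andP[hij /eqP e]]; exists i.
  have e2 : pi ^+ i * (1 - pi ^+ (j - i)) = 0.
    by rewrite mulrBr mulr1 -exprD subnKC ?(ltnW hij) // e subrr.
  have hu : (1 - pi ^+ (j - i)) \is a GRing.unit.
    apply: local_unit; apply/negP => hm; move: one_notin_m; rewrite -(subrK (pi ^+ (j - i)) 1).
    by rewrite idD //; [exact: mR_ideal | apply: hX; rewrite subn_gt0].
  by move: e2 => /(congr1 (fun z => z * (1 - pi ^+ (j - i))^-1)); rewrite mul0r -mulrA mulrV // mulr1.
rewrite negb_exists => /forallP hn.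
have inj : injective (fun i : 'I_(#|R|.+1) => pi ^+ i).
  move=> i j e; apply: val_inj => /=.
  case: (ltngtP i j) => // hij.
    by move: (hn i); rewrite negb_exists => /forallP /(_ j); rewrite hij e eqxx.
  by move: (hn j); rewrite negb_exists => /forallP /(_ i); rewrite hij e eqxx.
by move: (leq_card _ inj); rewrite card_ord ltnn.
Qed.

End LocalR.


Section LocalS.
Variable (R S : finComUnitRingType) (mR : {set R}) (iota : {rmorphism R -> S}).
Variable (h : {poly R}) (xi : S) (pi : R) (e : nat).
Hypotheses (hch : chain_ring R) (hmax : maximal_ideal mR).
Hypotheses (hpi : pi \in mR) (hprinc : forall x, x \in mR -> exists r, x = pi * r).
Hypotheses (he : pi ^+ e = 0).
Hypotheses (hmon : h \is monic) (hirr : irreducible_mod mR h) (hq : is_quotient_by iota h xi).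

Definition ev (p : {poly R}) : S := (map_poly iota p).[xi].
Lemma evD p q : ev (p + q) = ev p + ev q. Proof. by rewrite /ev rmorphD hornerD. Qed.
Lemma evN p : ev (- p) = - ev p. Proof. by rewrite /ev rmorphN hornerN. Qed.
Lemma evB p q : ev (p - q) = ev p - ev q. Proof. by rewrite evD evN. Qed.
Lemma evM p q : ev (p * q) = ev p * ev q. Proof. by rewrite /ev rmorphM hornerM. Qed.
Lemma evC c : ev c%:P = iota c. Proof. by rewrite /ev map_polyC hornerC. Qed.
Lemma ev1 : ev 1 = 1. Proof. by rewrite -polyC1 evC rmorph1. Qed.
Lemma evh : ev h = 0. Proof. by case: hq => _ /(_ h) [_ H]; apply: H; exists 1; rewrite mul1r. Qed.

Definition piS (y : S) := exists z, y = iota pi * z.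
Lemma piS0 : piS 0. Proof. by exists 0; rewrite mulr0. Qed.
Lemma piSD x y : piS x -> piS y -> piS (x + y).
Proof. by move=> [a ->] [b ->]; exists (a + b); rewrite mulrDr. Qed.
Lemma piSN x : piS x -> piS (- x).
Proof. by move=> [a ->]; exists (- a); rewrite mulrN. Qed.
Lemma piSM a x : piS x -> piS (a * x).
Proof. by move=> [b ->]; exists (a * b); rewrite mulrCA. Qed.

Lemma ev_pid p : poly_in_ideal mR p -> piS (ev p).
Proof.
move=> hp; rewrite /ev horner_coef.
apply: (big_ind piS); [exact: piS0 | exact: piSD | move=> i _].
rewrite coef_map; case: (hprinc (hp i)) => r ->.
by exists (iota r * xi ^+ i); rewrite mulrA; congr (_ * _); apply: rmorphM. Qed.

Lemma unit_1_sub w : piS w -> (1 - w) \is a GRing.unit.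
Proof.
move=> [z ->]; apply/unitrPr; exists (\sum_(i < e) (iota pi * z) ^+ i).
have := subrX1 (iota pi * z) e; rewrite exprMn -rmorphXn he rmorph0 mul0r sub0r.
by move=> E; rewrite -opprB mulNr -E opprK.
Qed.

Section Good.
Variable (y : S) (p : {poly R}).
Hypothesis (hy : y = ev p) (hny : y \isn't a GRing.unit).

Definition good (f : {poly R}) := exists s z, ev f = y * s + iota pi * z.
Lemma goodD f g : good f -> good g -> good (f + g).
Proof. by move=> [s1 [z1 e1]] [s2 [z2 e2]]; exists (s1 + s2), (z1 + z2); rewrite evD e1 e2; ring. Qed.
Lemma goodN f : good f -> good (- f).
Proof. by move=> [s1 [z1 e1]]; exists (- s1), (- z1); rewrite evN e1; ring. Qed.
Lemma goodB f g : good f -> good g -> good (f - g).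
Proof. by move=> hf hg; apply: goodD => //; apply: goodN. Qed.
Lemma goodM q f : good f -> good (q * f).
Proof. by move=> [s1 [z1 e1]]; exists (ev q * s1), (ev q * z1); rewrite evM e1; ring. Qed.
Lemma goodZ c f : good f -> good (c *: f).
Proof. by rewrite -mul_polyC; apply: goodM. Qed.
Lemma good_p : good p. Proof. by exists 1, 0; rewrite -hy; ring. Qed.
Lemma good_h : good h. Proof. by exists 0, 0; rewrite evh; ring. Qed.
Lemma good_pid f : poly_in_ideal mR f -> good f.
Proof. by move=> /ev_pid [z E]; exists 0, z; rewrite E; ring. Qed.
Lemma not_good1 : ~ good 1.
Proof.
move=> [s [z E]]; move/negP: hny; apply.
have : (y * s) \is a GRing.unit.
  have -> : y * s = 1 - iota pi * z by rewrite -ev1 E; ring.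
  by apply: unit_1_sub; exists z.
by rewrite unitrM => /andP[].
Qed.

Lemma reduce r d : good r -> (size r <= d)%N ->
  poly_in_ideal mR r \/ exists g, [/\ g \is monic, good g & (size g <= d)%N].
Proof.
move=> gr hs.
case: (boolP [forall i : 'I_(size r), r`_i \in mR]) => hall.
  left => i; case: (ltnP i (size r)) => hi.
    by move/forallP: hall => /(_ (Ordinal hi)).
  by rewrite nth_default //; exact: (id0 (mR_ideal hmax)).
right.
have exP : exists j, r`_j \notin mR.
  by move: hall; rewrite negb_forall => /existsP[i hi]; exists i.
have bnd : forall j, r`_j \notin mR -> (j <= size r)%N.
  move=> j hj; case: (ltnP j (size r)) => hj' //; first exact: ltnW.
  by move: hj; rewrite nth_default // (id0 (mR_ideal hmax)).
case: (ex_maxnP exP bnd) => j hj hmj.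
have hjs : (j < size r)%N.
  case: (ltnP j (size r)) => // hj'; by move: hj; rewrite nth_default // (id0 (mR_ideal hmax)).
have hu : r`_j \is a GRing.unit := local_unit hch hmax hj.
pose g := \poly_(i < j.+1) ((r`_j)^-1 * r`_i).
have sg : size g = j.+1 by rewrite size_poly_eq //= mulVr // oner_neq0.
exists g; split.
- by rewrite monicE lead_coefE sg /= coef_poly ltnSn mulVr.
- pose t := r - \poly_(i < j.+1) r`_i.
  have ht : poly_in_ideal mR t.
    move=> k; rewrite /t coefB coef_poly; case: ifP => hk; first by rewrite subrr (id0 (mR_ideal hmax)).
    rewrite subr0; apply/negPn/negP => hk'; move: (hmj k hk'); rewrite leqNgt.
    by rewrite ltnNge negbK; move: hk; rewrite ltnS => ->.
  have -> : g = (r`_j)^-1 *: (r - t).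
    by apply/polyP => k; rewrite /t opprB addrC subrK coefZ !coef_poly; case: ifP; rewrite ?mulr0.
  by apply: goodZ; apply: goodB => //; apply: good_pid.
- by rewrite sg (leq_trans hjs hs).
Qed.

Lemma main_ind n : forall g : {poly R}, size g = n.+1 -> g \is monic -> good g -> piS y.
Proof.
elim/ltn_ind: n => n IH g sg mg gg.
have g0 : g != 0 := monic_neq0 mg.
have hIH : forall g', g' \is monic -> good g' -> (size g' <= n)%N -> piS y.
  move=> g' mg' gg' sg'; have := monic_neq0 mg'; rewrite -size_poly_eq0.
  case E: (size g') => [|m] // _; apply: (IH m _ g') => //; by move: sg'; rewrite E.
pose q := Pdiv.Ring.rdivp h g; pose rr := Pdiv.Ring.rmodp h g.
have eh : h = q * g + rr := Pdiv.RingMonic.rdivp_eq mg h.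
have grr : good rr.
  have -> : rr = h - q * g by rewrite eh addrC addKr.
  by apply: goodB; [exact: good_h | apply: goodM].
have srr : (size rr <= n)%N by rewrite -ltnS -sg Pdiv.Ring.ltn_rmodpN0.
case: (reduce grr srr) => [pr | [g' [mg' gg' sg']]]; last exact: hIH mg' gg' sg'.
have hqg : poly_in_ideal mR (h - q * g) by rewrite {1}eh addrC addKr.
case: hirr => _ [_ /(_ q g hqg)] [] [hq0 hqi]; last first.
  (* g is a unit mod m: then g = 1 *)
  case: n IH sg {hIH srr} => [|n] _ sg.
    have : g = 1.
      by rewrite (size1_polyC (eq_leq sg)); move/monicP: mg; rewrite lead_coefE sg => ->.
    by move=> E; exfalso; apply: not_good1; rewrite -E.
  have := hqi n.+1 (ltn0Sn _); move/monicP: mg; rewrite lead_coefE sg /= => ->.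
  by rewrite (negbTE (one_notin_m hmax)).
set u := q`_0.
have hqu : poly_in_ideal mR (q - u%:P).
  move=> [|i]; first by rewrite coefB coefC subrr (id0 (mR_ideal hmax)).
  by rewrite coefB coefC subr0; apply: hqi.
have hhu : poly_in_ideal mR (h - u%:P * g).
  have -> : h - u%:P * g = (h - q * g) + (q - u%:P) * g by ring.
  by apply: (pidD (mR_ideal hmax)) => //; apply: (pid_mul (mR_ideal hmax)).
have evg : piS (ev g).
  have uu : u \is a GRing.unit := local_unit hch hmax hq0.
  have := ev_pid hhu; rewrite evB evh evM evC sub0r => /piSN; rewrite opprK => /(piSM (iota u^-1)).
  by rewrite mulrA -rmorphM mulVr // rmorph1 mul1r.
pose q' := Pdiv.Ring.rdivp p g; pose r' := Pdiv.Ring.rmodp p g.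
have ep : p = q' * g + r' := Pdiv.RingMonic.rdivp_eq mg p.
have gr' : good r'.
  have -> : r' = p - q' * g by rewrite ep addrC addKr.
  by apply: goodB; [exact: good_p | apply: goodM].
have sr' : (size r' <= n)%N by rewrite -ltnS -sg Pdiv.Ring.ltn_rmodpN0.
case: (reduce gr' sr') => [pr' | [g' [mg' gg' sg']]]; last exact: hIH mg' gg' sg'.
by rewrite hy ep evD evM; apply: piSD; [apply: piSM | apply: ev_pid].
Qed.

End Good.

Lemma S_local y : y \isn't a GRing.unit -> piS y.
Proof.
move=> hny; case: hq => [hs _]; case: (hs y) => p hp.
have sh : size h = (size h).-1.+1 by rewrite prednK // size_poly_gt0 monic_neq0.
exact: (main_ind hp hny sh hmon (good_h y)).
Qed.

End LocalS.


Section Key.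
Variable (R S : finComUnitRingType) (iota : {rmorphism R -> S}) (sigma : {rmorphism S -> S}).
Variable (pi : R) (e : nat) (l : nat) (a : 'I_l -> S).
Hypotheses (he : pi ^+ e = 0) (hinj : injective iota).
Hypothesis hfix : forall y : S, sigma y = y <-> exists r0 : R, y = iota r0.
Hypothesis hloc : forall y : S, y \isn't a GRing.unit -> piS iota pi y.
Hypothesis ha : forall i, a i \is a GRing.unit.
Hypothesis hdist : forall i j, i != j -> forall d : S, d \is a GRing.unit ->
  a i - sigma d * a j * d^-1 \is a GRing.unit.

Lemma sig_iota r : sigma (iota r) = iota r.
Proof. by apply/hfix; exists r. Qed.

Definition Rind (s : seq S) := forall rr : nat -> R,
  \sum_(j < size s) iota (rr j) * s`_j = 0 -> forall j, (j < size s)%N -> rr j = 0.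

Lemma Rind_head_unit x s : Rind (x :: s) -> x \is a GRing.unit.
Proof.
move=> hR; apply/negPn/negP => /hloc [z hz].
have exP : exists n, pi ^+ n == 0 by exists e; rewrite he.
case: (ex_minnP exP) => e0 /eqP he0 hmin.
have e0pos : (0 < e0)%N.
  by case: e0 he0 {hmin} => // /eqP; rewrite expr0 oner_eq0.
have hr : pi ^+ e0.-1 != 0.
  apply/negP => /hmin; rewrite -ltnS prednK // ltnn; done.
move/negP: hr; apply.
have := hR (fun j => if j == 0%N then pi ^+ e0.-1 else 0); rewrite /= => H.
apply/eqP; apply: (H _ 0%N) => //.
rewrite big_ord_recl /= big1 ?addr0; last by move=> i _; rewrite rmorph0 mul0r.
by rewrite hz mulrA -rmorphM -exprSr prednK // he0 rmorph0 mul0r.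
Qed.

Lemma decomp (b : S) : b != 0 -> exists v u, u \is a GRing.unit /\ b = iota pi ^+ v * u.
Proof.
move=> hb.
pose P := fun v => [exists s : S, b == iota pi ^+ v * s].
have exP : exists v, P v by exists 0%N; apply/existsP; exists b; rewrite expr0 mul1r.
have bnd : forall v, P v -> (v <= e)%N.
  move=> v /existsP[s /eqP hs]; case: (leqP v e) => // hv.
  move: hb; rewrite hs -(subnKC (ltnW hv)) exprD -rmorphXn he rmorph0 mul0r mul0r eqxx //.
case: (ex_maxnP exP bnd) => v /existsP[s /eqP hs] hm.
exists v, s; split => //.
apply/negPn/negP => /hloc [z hz].
have : P v.+1 by apply/existsP; exists z; rewrite hs hz mulrA -exprSr.
by move/hm; rewrite ltnn.
Qed.

Definition Tm (ai b beta : S) := Dv sigma ai beta ('X - b%:P).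

Lemma T_inj i i0 g beta : i != i0 -> g \is a GRing.unit ->
  Tm (a i) (sigma g * a i0 * g^-1) beta = 0 -> beta = 0.
Proof.
move=> hii gu; rewrite /Tm DvXsubC => E.
apply/eqP/negP => /negP hb0; case: (decomp hb0) => v [u [uu hb]].
set b := sigma g * a i0 * g^-1 in E.
set d := u^-1 * g.
have du : d \is a GRing.unit by rewrite unitrM unitrV uu.
have su : sigma u \is a GRing.unit by rewrite rmorph_unit.
have hsd : sigma d * a i0 * d^-1 = (sigma u)^-1 * b * u.
  by rewrite /d rmorphM rmorphV // invrM ?unitrV // invrK /b; ring.
have Xu : sigma u * a i - b * u \is a GRing.unit.
  have -> : sigma u * a i - b * u = sigma u * (a i - sigma d * a i0 * d^-1).
    rewrite hsd; have -> : sigma u * (a i - (sigma u)^-1 * b * u) = sigma u * a i - (sigma u * (sigma u)^-1) * b * u by ring.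
    by rewrite mulrV // mul1r.
  by rewrite unitrM su hdist.
have E2 : iota pi ^+ v * (sigma u * a i - b * u) = 0.
  by rewrite -E hb rmorphM rmorphXn sig_iota; ring.
move: E2 => /(congr1 (fun z => z * (sigma u * a i - b * u)^-1)).
rewrite mul0r -mulrA mulrV // mulr1 => hv.
by move: hb0; rewrite hb hv mul0r eqxx.
Qed.

Lemma Tm_lin ai b (s : seq S) (rr : nat -> R) :
  Tm ai b (\sum_(j < size s) iota (rr j) * s`_j) = \sum_(j < size s) iota (rr j) * Tm ai b s`_j.
Proof.
rewrite /Tm Dv_beta_sum; apply: eq_bigr => j _.
by rewrite Dv_beta_scale // sig_iota.
Qed.

Lemma Tm0 ai b : Tm ai b 0 = 0.
Proof. exact: Dv_beta0. Qed.

Lemma Rind_map ai b s : Rind s -> (forall beta, Tm ai b beta = 0 -> beta = 0) ->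
  Rind (map (Tm ai b) s).
Proof.
move=> hR hT rr; rewrite size_map => E; apply: hR; apply: hT.
rewrite Tm_lin -[X in _ = X]E; apply: eq_bigr => j _; by rewrite (nth_map 0).
Qed.

Lemma Rind_behead ai g s : Rind (g :: s) -> g \is a GRing.unit -> ai \is a GRing.unit ->
  Rind (map (Tm ai (sigma g * ai * g^-1)) s).
Proof.
move=> hR gu au rr; rewrite size_map => E.
have E' : Tm ai (sigma g * ai * g^-1) (\sum_(j < size s) iota (rr j) * s`_j) = 0.
  by rewrite Tm_lin -[X in _ = X]E; apply: eq_bigr => j _; rewrite (nth_map 0).
set beta := \sum_(j < size s) iota (rr j) * s`_j in E'.
move: E'; rewrite /Tm DvXsubC => E'.
have sgu : sigma g \is a GRing.unit by rewrite rmorph_unit.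
have hs : sigma (beta * g^-1) = beta * g^-1.
  rewrite rmorphM rmorphV //.
  have : sigma beta * ai * ai^-1 * (sigma g)^-1 = sigma g * ai * g^-1 * beta * ai^-1 * (sigma g)^-1.
    by move/subr0_eq: E' => ->.
  rewrite -(mulrA _ ai) mulrV // mulr1 => ->.
  have -> : sigma g * ai * g^-1 * beta * ai^-1 * (sigma g)^-1 = (sigma g * (sigma g)^-1) * (ai * ai^-1) * (beta * g^-1) by ring.
  by rewrite !mulrV // !mul1r.
case/hfix: hs => r0 hr0.
have hb : beta = iota r0 * g by rewrite -hr0 -mulrA mulVr // mulr1.
move=> j hj.
have := hR (fun k => if k is k'.+1 then rr k' else - r0) _ j.+1; apply => //.
rewrite big_ord_recl /= rmorphN -/beta hb.
by rewrite mulNr addNr.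
Qed.

Lemma key M : forall (G : {poly S}) (fam : 'I_l -> seq S),
  (size G <= M)%N -> (M <= \sum_(i < l) size (fam i))%N -> (forall i, Rind (fam i)) ->
  (forall i x, x \in fam i -> Dv sigma (a i) x G = 0) -> G = 0.
Proof.
elim: M => [|M IH] G fam sG sF hR hV.
  by apply/eqP; rewrite -size_poly_eq0 -leqn0.
case: (pickP (fun i => (0 < size (fam i))%N)) => [i0 hi0|hn]; last first.
  by move: sF; rewrite big1 // => i _; move: (hn i) => /=; case: (fam i).
case E0: (fam i0) hi0 => [|g0 s0] // _.
have gu : g0 \is a GRing.unit by apply: (@Rind_head_unit g0 s0); rewrite -E0.
set b := sigma g0 * a i0 * g0^-1.
have eqG := Gq_eq sigma b G.
set G' := Gq sigma b G in eqG *; set c := Gc sigma b G in eqG.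
have hD : forall i x, Dv sigma (a i) x G = Dv sigma (a i) (Tm (a i) b x) G' + c * x.
  by move=> i x; rewrite {1}eqG DvD Dv_mul DvC.
have hc : c = 0.
  have := hV i0 g0; rewrite E0 mem_head => /(_ isT); rewrite hD.
  have -> : Tm (a i0) b g0 = 0 by rewrite /Tm DvXsubC /b -mulrA mulVr // mulr1 subrr.
  rewrite Dv_beta0 add0r => /(congr1 (fun z => z * g0^-1)).
  by rewrite -mulrA mulrV // mulr1 mul0r.
pose fam' := fun i => map (Tm (a i) b) (if i == i0 then behead (fam i) else fam i).
have hG' : G' = 0.
  apply: (IH G' fam').
  - rewrite (leq_trans (Gq_size _ _ _)) //; move: sG; case: (size G) => //= n.
  - rewrite (bigD1 i0) //= in sF; rewrite (bigD1 i0) //= /fam' eqxx size_map.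
    move: sF; rewrite E0 /= ltnS; congr (_ <= _ + _)%N; apply: eq_bigr => i /negPf ->; by rewrite size_map.
  - move=> i; rewrite /fam'; case: eqP => [-> | /eqP hne].
      rewrite E0 /=; apply: Rind_behead => //; by rewrite -E0.
    by apply: Rind_map => // beta; apply: T_inj hne gu.
  - move=> i x /mapP [y hy ->].
    have hy' : y \in fam i by move: hy; case: ifP => // _; apply: mem_behead.
    by have := hV i y hy'; rewrite hD hc mul0r addr0.
by rewrite eqG hG' skew_mul0l hc add0r.
Qed.

End Key.


Definition ofun (T : nmodType) p (v : 'I_p -> T) (j : nat) : T :=
  if insub j is Some jj then v jj else 0.
Lemma ofun_val (T : nmodType) p (v : 'I_p -> T) (i : 'I_p) : ofun v i = v i.
Proof. by rewrite /ofun valK. Qed.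
Lemma ofun_out (T : nmodType) p (v : 'I_p -> T) j : (p <= j)%N -> ofun v j = 0.
Proof. by move=> hj; rewrite /ofun insubF // ltnNge hj. Qed.

Lemma prefix_zero (R : finComUnitRingType) N rk (dg : nat -> R) :
  (forall i, (i.+1 < N)%N -> exists x, dg i.+1 = x * dg i) ->
  #|[set i : 'I_N | dg i != 0]| = rk -> forall j, (j < N)%N -> (rk <= j)%N -> dg j = 0.
Proof.
move=> hch hcard j hj hrk; apply/eqP/negP => /negP hdj.
have hall : forall k, (k <= j)%N -> dg (j - k)%N != 0.
  elim=> [|k IH] hk; first by rewrite subn0.
  apply/negP => /eqP h0; move: (IH (ltnW hk)).
  have [x ->] : exists x, dg (j - k)%N = x * dg (j - k.+1)%N.
    have -> : (j - k = (j - k.+1).+1)%N by lia.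
    by apply: hch; lia.
  by rewrite h0 mulr0 eqxx.
have hsub : [set widen_ord hj i | i : 'I_j.+1] \subset [set i : 'I_N | dg i != 0].
  apply/subsetP => x /imsetP[i _ ->]; rewrite inE /=.
  have -> : (i : nat) = (j - (j - i))%N by have := ltn_ord i; lia.
  by apply: hall; lia.
move: (subset_leq_card hsub); rewrite card_imset ?card_ord ?hcard; last by move=> a b /(congr1 val) /= /val_inj.
by move=> h; move: (leq_trans h hrk); rewrite ltnn.
Qed.

Section Fin.
Variable (R S : finComUnitRingType) (iota : {rmorphism R -> S}).

Lemma Rind_of_indep p (v : 'I_p -> S) : R_indep iota v -> Rind iota (mkseq (ofun v) p).
Proof.
move=> hv rr; rewrite size_mkseq => E j hj.
have E' : \sum_(i < p) iota (rr i) * v i = 0.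
  by rewrite -[X in _ = X]E; apply: eq_bigr => i _; rewrite nth_mkseq // ofun_val.
exact: (hv (fun i => rr i) E' (Ordinal hj)).
Qed.

Lemma mem_mkseq_ex (T : eqType) (f : nat -> T) n x : x \in mkseq f n -> exists2 j, (j < n)%N & x = f j.
Proof. by rewrite /mkseq => /mapP[j]; rewrite mem_iota add0n => /andP[_ hj] ->; exists j. Qed.

Lemma Rind_ker p k0 (v : 'I_p -> S) (Qm : 'M[R]_p) :
  R_indep iota v -> Qm \in unitmx ->
  Rind iota (mkseq (fun j => \sum_(l < p) iota (ofun (fun m => Qm l m) (k0 + j)) * v l) (p - k0)).
Proof.
move=> hv hQ rr; rewrite size_mkseq => E j hj.
have hk0 : (k0 <= p)%N by lia.
pose z l := \sum_(i < p - k0) ofun (fun m => Qm l m) (k0 + i) * rr i.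
have hz : forall l, z l = 0.
  apply: hv; rewrite -[X in _ = X]E.
  rewrite (eq_bigr (fun i : 'I_(p - k0) => \sum_(l < p) iota (rr i) * (iota (ofun (fun m => Qm l m) (k0 + i)) * v l))); last first.
    by move=> i _; rewrite nth_mkseq // mulr_sumr.
  rewrite exchange_big /=; apply: eq_bigr => l _.
  rewrite /z rmorph_sum mulr_suml; apply: eq_bigr => i _; rewrite rmorphM; ring.
pose w : 'cV[R]_p := \col_(m < p) (if (k0 <= m)%N then rr (m - k0)%N else 0).
have hw : Qm *m w = 0.
  apply/matrixP => l c; rewrite !mxE ord1; transitivity (z l); last exact: hz l.
  rewrite /z.
  rewrite (eq_bigr (fun m : 'I_p => ofun (fun m => Qm l m) m * (if (k0 <= m)%N then rr (m - k0)%N else 0))); last first.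
    by move=> m _; rewrite mxE ofun_val.
  rewrite -(big_mkord xpredT (fun m => ofun (fun m => Qm l m) m * (if (k0 <= m)%N then rr (m - k0)%N else 0))).
  rewrite (@big_cat_nat _ _ _ k0) //= big_nat_cond big1 ?add0r; last first.
    by move=> m /andP[/andP[_ hm] _]; rewrite leqNgt hm mulr0.
  rewrite -{1}[k0]add0n big_addn big_mkord; apply: eq_bigr => i _.
  by rewrite leq_addl addnK addnC.
have w0 : w = 0 by rewrite -(mulKmx hQ w) hw mulmx0.
have hjp : (k0 + j < p)%N by lia.
have := congr1 (fun M : 'cV[R]_p => M (Ordinal hjp) 0) w0; rewrite !mxE /= leq_addr addKn.
by [].
Qed.

Lemma smith_ker d p (A : 'M[R]_(d, p)) rk (ev : 'I_p -> S) (xi : S) :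
  (forall j, ev j = \sum_(i < d) iota (A i j) * xi ^+ i) -> smith_rank A rk ->
  exists2 Qm : 'M[R]_p, Qm \in unitmx &
    forall m, (rk <= m)%N -> \sum_(l < p) iota (ofun (fun m => Qm l m) m) * ev l = 0.
Proof.
move=> hev [P [Q [dg [hP [hQ [hD [hch hcard]]]]]]].
exists Q => // m hm.
case: (ltnP m p) => hmp; last first.
  by rewrite big1 // => l _; rewrite ofun_out // rmorph0 mul0r.
pose mo := Ordinal hmp.
rewrite -[m]/(val mo).
rewrite (eq_bigr (fun l : 'I_p => \sum_(i < d) iota (Q l mo) * (iota (A i l) * xi ^+ i))); last first.
  by move=> l _; rewrite ofun_val hev mulr_sumr.
rewrite exchange_big /= big1 // => i _.
have hAQ : A *m Q = invmx P *m (P *m A *m Q) by rewrite -mulmxA mulKmx.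
have -> : \sum_(l < p) iota (Q l mo) * (iota (A i l) * xi ^+ i) = iota ((A *m Q) i mo) * xi ^+ i.
  rewrite !mxE rmorph_sum mulr_suml; apply: eq_bigr => l _; rewrite rmorphM; ring.
rewrite hAQ hD !mxE big1 ?rmorph0 ?mul0r // => q _; rewrite !mxE.
case: eqP => [hq|]; last by rewrite mulr0.
rewrite (prefix_zero hch hcard) ?mulr0 //=; last by rewrite hq.
by rewrite hq leq_min hmp -hq ltn_ord.
Qed.

End Fin.

Lemma indep_unit (R S : finComUnitRingType) (iota : {rmorphism R -> S}) (pi : R) e
  (hloc : forall y : S, y \isn't a GRing.unit -> piS iota pi y) (he : pi ^+ e = 0)
  p (v : 'I_p -> S) : R_indep iota v -> forall j, v j \is a GRing.unit.
Proof.
move=> hv j; apply/negPn/negP => /hloc [z hz].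
have exP : exists n, pi ^+ n == 0 by exists e; rewrite he.
case: (ex_minnP exP) => e0 /eqP he0 hmin.
have e0pos : (0 < e0)%N.
  by case: e0 he0 {hmin} => // /eqP; rewrite expr0 oner_eq0.
have hr : pi ^+ e0.-1 != 0.
  apply/negP => /hmin; rewrite -ltnS prednK // ltnn; done.
move/negP: hr; apply; apply/eqP.
have := hv (fun k => if k == j then pi ^+ e0.-1 else 0); move=> H; have := H _ j; rewrite eqxx; apply.
rewrite (bigD1 j) //= eqxx big1 ?addr0; last by move=> i /negPf ->; rewrite rmorph0 mul0r.
by rewrite hz mulrA -rmorphM -exprSr prednK // he0 rmorph0 mul0r.
Qed.

Lemma skew_mul_size (S : finComUnitRingType) (sigma : {rmorphism S -> S}) (P Q : {poly S}) :
  (size (skew_mul sigma P Q) <= (size P + size Q).-1)%N.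
Proof.
rewrite /skew_mul (leq_trans (size_sum _ _ _)) //; apply/bigmax_leqP => i _.
rewrite (leq_trans (size_sum _ _ _)) //; apply/bigmax_leqP => j _.
rewrite (leq_trans (size_scale_leq _ _)) // size_polyXn.
have := ltn_ord i; have := ltn_ord j; lia.
Qed.


Unset Implicit Arguments. Set Strict Implicit.

Theorem lemma8
  (R S : finComUnitRingType) (mR : {set R}) (iota : {rmorphism R -> S})
  (d : nat) (h : {poly R}) (xi : S) (sigma : {rmorphism S -> S})
  (l : nat) (nn : 'I_l -> nat) (a : 'I_l -> S) (beta : forall i, 'I_(nn i) -> S)
  (k : nat) (c e r : forall i, 'I_(nn i) -> S) (F H L Q : {poly S}) :
  (* standing assumptions on R, S, sigma *)
  chain_ring R -> maximal_ideal mR ->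
  injective iota ->
  h \is monic -> size h = d.+1 -> irreducible_mod mR h ->
  is_quotient_by iota h xi ->
  bijective sigma ->
  (forall y : S, sigma y = y <-> exists r0 : R, y = iota r0) ->
  (forall tau : {rmorphism S -> S}, bijective tau ->
     (forall r0 : R, tau (iota r0) = iota r0) ->
     exists s : nat, forall y, tau y = iter s sigma y) ->
  (forall y : S, in_mS iota mR (sigma y - y ^+ qcard mR)) ->
  (* hypotheses of the lemma *)
  (forall i, a i \is a GRing.unit) ->
  (forall i j : 'I_l, (i < j)%N -> forall b : S, b \is a GRing.unit ->
     a i - sigma b * a j * b^-1 \is a GRing.unit) ->
  (forall i, R_indep iota (beta i)) ->
  (1 <= k <= (\sum_(i < l) nn i) - 1)%N ->
  in_LRS sigma k a beta c ->
  wtSR_le iota d xi e (((\sum_(i < l) nn i) - k)./2) ->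
  (forall i j, r i j = c i j + e i j) ->
  (size F <= \sum_(i < l) nn i)%N ->
  (size H <= \sum_(i < l) nn i)%N ->
  (forall i j, skew_ev sigma F (sigma (beta i j) * a i * (beta i j)^-1) (c i j * (beta i j)^-1)) ->
  (forall i j, skew_ev sigma H (sigma (beta i j) * a i * (beta i j)^-1) (r i j * (beta i j)^-1)) ->
  L \is monic ->
  (size L <= (((\sum_(i < l) nn i) - k)./2).+1)%N ->
  (size Q <= ((\sum_(i < l) nn i) - k)./2 + k)%N ->
  (forall i j, exists z : S,
     skew_ev sigma (skew_mul sigma L H) (sigma (beta i j) * a i * (beta i j)^-1) z /\
     skew_ev sigma Q (sigma (beta i j) * a i * (beta i j)^-1) z) ->
  Q = skew_mul sigma L F.
Proof.
move=> hch hmax hinj hmon hsh hirr hq hbij hfix hgal hmS ha hdist hind hk hLRS hwt hr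
  sF sH hFev hHev mL sL sQ hLHQ.
move: hk hwt sF sH sL sQ.
set n := (\sum_(i < l) nn i)%N; set t := ((n - k)./2)%N => hk hwt sF sH sL sQ.
case: (principal_m hch hmax) => pi hpi hprinc.
case: (nilp_m hch hmax hpi) => ee he.
have hloc : forall y : S, y \isn't a GRing.unit -> piS iota pi y.
  by move=> y; exact: (S_local hch hmax hprinc he hmon hirr hq).
have hdist' : forall i j, i != j -> forall d : S, d \is a GRing.unit ->
    a i - sigma d * a j * d^-1 \is a GRing.unit.
  move=> i j hij dd du; case: (ltngtP i j) => hlt; first exact: hdist.
    have sdu : sigma dd \is a GRing.unit by rewrite rmorph_unit.
    have := hdist j i hlt (dd^-1); rewrite unitrV rmorphV // invrK => /(_ du) hU.
    have -> : a i - sigma dd * a j * dd^-1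
        = - (sigma dd) * (a j - (sigma dd)^-1 * a i * dd) * dd^-1
          + (1 - sigma dd * (sigma dd)^-1) * a i + (sigma dd * (sigma dd)^-1) * a i * (1 - dd * dd^-1) by ring.
    rewrite mulrV // mulrV // !subrr mul0r mulr0 !addr0.
    by rewrite !unitrM unitrN sdu hU unitrV du.
  by move/eqP: hij; case; apply: val_inj.
have hbu : forall i j, beta i j \is a GRing.unit.
  by move=> i j; apply: (indep_unit hloc he (hind i)).
have hFD : forall i j, Dv sigma (a i) (beta i j) F = c i j.
  by move=> i j; rewrite (skew_ev_Dv (hbu i j) erefl (hFev i j)) -mulrA mulVr // mulr1.
have hHD : forall i j, Dv sigma (a i) (beta i j) H = r i j.
  by move=> i j; rewrite (skew_ev_Dv (hbu i j) erefl (hHev i j)) -mulrA mulVr // mulr1.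
have hQD : forall i j, Dv sigma (a i) (beta i j) Q = Dv sigma (a i) (r i j) L.
  move=> i j; case: (hLHQ i j) => z [h1 h2].
  by rewrite (skew_ev_Dv (hbu i j) erefl h2) -(skew_ev_Dv (hbu i j) erefl h1) Dv_mul hHD.
case: hLRS => u hu.
pose F0 := \sum_(s < k) u s *: 'X^s.
have sF0 : (size F0 <= k)%N.
  rewrite (leq_trans (size_sum _ _ _)) //; apply/bigmax_leqP => s _.
  by rewrite (leq_trans (size_scale_leq _ _)) // size_polyXn.
have hFF0 : F = F0.
  apply/eqP; rewrite -subr_eq0; apply/eqP.
  apply: (key he hfix hloc ha hdist' (M := n) (fam := fun i => mkseq (ofun (beta i)) (nn i))).
  - rewrite (leq_trans (size_polyD _ _)) // geq_max sF size_polyN (leq_trans sF0) //; lia.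
  - by rewrite (eq_bigr _ (fun i _ => size_mkseq _ _)).
  - by move=> i; apply: Rind_of_indep.
  - move=> i x /mem_mkseq_ex [j hj ->].
    rewrite -[j]/(val (Ordinal hj)) ofun_val DvB hFD /F0 Dv_sum (hu i (Ordinal hj)).
    by apply/eqP; rewrite subr_eq0; apply/eqP; apply: eq_bigr => s _; rewrite DvXn.
case: hwt => rk [hrk hsum].
have : forall i, exists2 Qm : 'M[R]_(nn i), Qm \in unitmx &
    forall m, (rk i <= m)%N -> \sum_(l0 < nn i) iota (ofun (fun m => Qm l0 m) m) * e i l0 = 0.
  by move=> i; case: (hrk i) => A [hA hs]; exact: (smith_ker hA hs).
case/fin_all_exists2 => Qf hQu hQk.
pose G := Q - skew_mul sigma L F.
have hGD : forall i j, Dv sigma (a i) (beta i j) G = Dv sigma (a i) (e i j) L.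
  move=> i j; rewrite DvB hQD Dv_mul hFD hr.
  by rewrite Dv_beta_add addrC addKr.
have hG : G = 0.
  apply: (key he hfix hloc ha hdist' (M := (t + k)%N)
    (fam := fun i => mkseq (fun j => \sum_(l0 < nn i) iota (ofun (fun m => Qf i l0 m) (rk i + j)) * beta i l0) (nn i - rk i))).
  - rewrite (leq_trans (size_polyD _ _)) // geq_max sQ size_polyN hFF0.
    by rewrite (leq_trans (skew_mul_size _ _ _)) //; lia.
  - rewrite (eq_bigr _ (fun i _ => size_mkseq _ _)).
    have h1 : (n <= \sum_(i < l) (nn i - rk i) + \sum_(i < l) rk i)%N.
      by rewrite /n -big_split /=; apply: leq_sum => i _; lia.
    have h2 := odd_double_half (n - k); rewrite -addnn in h2.
    rewrite -/t in h2.
    set X := (\sum_(i < l) (nn i - rk i))%N in h1 *; set Y := (\sum_(i < l) rk i)%N in h1 hsum; clearbody X Y n t; lia.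
  - by move=> i; apply: Rind_ker.
  - move=> i x /mem_mkseq_ex [j hj ->].
    have fx : forall r0 : R, sigma (iota r0) = iota r0 by move=> r0; apply/hfix; exists r0.
    transitivity (Dv sigma (a i) (\sum_(l0 < nn i) iota (ofun (fun m => Qf i l0 m) (rk i + j)) * e i l0) L).
      rewrite !Dv_beta_sum; apply: eq_bigr => l0 _.
      by rewrite !Dv_beta_scale ?fx // hGD.
    by rewrite hQk ?leq_addr // Dv_beta0.
by apply/eqP; rewrite -subr_eq0; apply/eqP.
Qed.
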